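(* Let $\sigma$ be an $(\alpha,\beta)$-ReLU activation applied entrywise. For every positive semidefinite $\Sigma\in\mathbb R^{n\times n}$, $\mathbb E_{h\sim N(\mathbf 0_n,\Sigma)}[\mathrm{Dir}(\sigma(h))]\le\frac{\alpha^2+\beta^2}{2}\,\mathbb E_{h\sim N(\mathbf 0_n,\Sigma)}[\mathrm{Dir}(h)].$
   Context: An activation $\sigma:\mathbb R\to\mathbb R$ is $(\alpha,\beta)$-ReLU if $\sigma(x)=\alpha x$ for $x\ge0$ and $\sigma(x)=\beta x$ for $x<0$, where $\alpha,\beta\ge0$ are not both $0$. Let $\mathcal G=(\mathcal V,\mathcal E)$ be a finite undirected graph with $n$ nodes, adjacency matrix $A$, degree matrix $D=\mathrm{diag}(A\mathbf 1_n)$ with degrees $d_i$, $\tilde A=A+I$, $\tilde D=D+I$, $\hat A=\tilde D^{-1/2}\tilde A\tilde D^{-1/2}$, $\hat L=I-\hat A$. For $x\in\mathbb R^n$, $\mathrm{Dir}(x)=x^\top\hat Lx=\sum_{\{i,j\}\in\mathcal E}(x_i/\sqrt{1+d_i}-x_j/\sqrt{1+d_j})^2$. *)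

(* Defs.v *)
From HB Require Import structures.
From mathcomp Require Import all_boot all_order all_algebra.
From mathcomp Require Import all_classical all_reals all_analysis.
Set Implicit Arguments. Unset Strict Implicit. Unset Printing Implicit Defensive.
Import Order.TTheory GRing.Theory Num.Theory.
Local Open Scope ring_scope.

Section Defs.
Variable R : realType.

Definition relu_ab (alpha beta : R) (x : R) : R :=
  if 0 <= x then alpha * x else beta * x.

Definition is_ab_relu (alpha beta : R) : Prop :=
  0 <= alpha /\ 0 <= beta /\ ~ (alpha = 0 /\ beta = 0).

Definition map_act n (s : R -> R) (x : 'rV[R]_n) : 'rV[R]_n := \row_i s (x 0 i).

Definition is_graph n (e : rel 'I_n) : Prop :=
  (forall i j, e i j = e j i) /\ (forall i, e i i = false).

Definition adj n (e : rel 'I_n) : 'M[R]_n := \matrix_(i, j) (e i j)%:R.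
Definition deg n (e : rel 'I_n) (i : 'I_n) : R := \sum_j adj e i j.
Definition Dtil_isqrt n (e : rel 'I_n) : 'M[R]_n :=
  diag_mx (\row_i (Num.sqrt (1 + deg e i))^-1).
Definition Ahat n (e : rel 'I_n) : 'M[R]_n :=
  Dtil_isqrt e *m (adj e + 1%:M) *m Dtil_isqrt e.
Definition Lhat n (e : rel 'I_n) : 'M[R]_n := 1%:M - Ahat e.
Definition Dir n (e : rel 'I_n) (x : 'rV[R]_n) : R := (x *m Lhat e *m x^T) 0 0.

Definition psd n (S : 'M[R]_n) : Prop :=
  S^T = S /\ forall x : 'rV[R]_n, 0 <= (x *m S *m x^T) 0 0.

(* Expectation of a nonnegative (extended-real) function of a standard
   Gaussian vector z ~ N(0, I_n), as an iterated integral over the n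
   independent N(0,1) coordinates. *)
Fixpoint std_gauss_exp (n : nat) : ('rV[R]_n -> \bar R) -> \bar R :=
  match n return ('rV[R]_n -> \bar R) -> \bar R with
  | 0 => fun f => f 0
  | m.+1 => fun f =>
      (\int[normal_prob (0:R) 1]_x
         std_gauss_exp (fun v : 'rV[R]_m => f (row_mx (\row_(_ < 1) x) v)))%E
  end.

(* E_{h ~ N(0, L L^T)} [g h], realised as h = L z with z ~ N(0, I_n). *)
Definition gauss_exp n (L : 'M[R]_n) (g : 'rV[R]_n -> \bar R) : \bar R :=
  std_gauss_exp (fun z : 'rV[R]_n => g (z *m L^T)).

End Defs.

(* Main.v *)
Require Import Defs.
From HB Require Import structures.
From mathcomp Require Import all_boot all_order all_algebra.
From mathcomp Require Import all_classical all_reals all_analysis.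
From mathcomp Require Import ring lra.
Import Order.TTheory GRing.Theory Num.Theory.
Local Open Scope ring_scope.
Section Sym.
Local Open Scope ereal_scope.
Variable R : realType.
Notation N := (normal_prob (0:R) 1).
Notation mu := (@lebesgue_measure R).

Lemma normal_pdfN (x : R) : normal_pdf 0 1 (- x) = normal_pdf 0 1 x.
Proof. by rewrite /normal_pdf oner_eq0 /normal_fun !subr0 sqrrN. Qed.

Lemma normal_symA (A : set R) : measurable A -> N ((-%R) @^-1` A) = N A.
Proof.
move=> mA; rewrite /normal_prob.
transitivity (\int[pushforward mu (-%R : _ -> measurableTypeR R)]_(x in A)
   (normal_pdf 0 1 x)%:E); last first.
  by apply: eq_measure_integral => //= B mB _; exact: lebesgue_measureN.
rewrite ge0_integral_pushforward //=.
all: try (by apply: eq_integral => x _; rewrite normal_pdfN).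


- apply/measurable_realfun.measurable_EFinP; apply: measurable_funTS; exact: measurable_normal_pdf.
- by move=> x _; rewrite lee_fin normal_pdf_ge0.
Qed.
Import HBNNSimple.
Lemma int_le (f g : R -> \bar R) : (forall x, 0 <= f x) -> (forall x, f x <= g x) ->
  \int[N]_x f x <= \int[N]_x g x.
Proof.
move=> f0 fg; have g0 x : 0 <= g x by exact: le_trans (f0 x) (fg x).
rewrite !ge0_integralTE //; apply: ereal_sup_le => _ [h hf <-]; exists h => //.
by move=> x; exact: le_trans (hf x) (fg x).
Qed.

Lemma int_symle (f : R -> \bar R) : (forall x, 0 <= f x) ->
  \int[N]_x f (- x)%R <= \int[N]_x f x.
Proof.
move=> f0; rewrite ge0_integralTE //; apply: ge_ereal_sup => _ [h hf <-].
rewrite -integralT_nnsfun.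
have -> : \int[N]_x (h x)%:E = \int[pushforward N (-%R : _ -> measurableTypeR R)]_x (h x)%:E.
  apply: eq_measure_integral => /= B mB _; rewrite /pushforward.
  by rewrite normal_symA.
rewrite ge0_integral_pushforward //=.
- apply: int_le => x; first by rewrite lee_fin.
  by have := hf (- x)%R; rewrite opprK.
- apply/measurable_realfun.measurable_EFinP; exact: measurable_funP.
- by move=> x _; rewrite lee_fin.
Qed.

Lemma int_sym (f : R -> \bar R) : (forall x, 0 <= f x) ->
  \int[N]_x f (- x)%R = \int[N]_x f x.
Proof.
move=> f0; apply/eqP; rewrite eq_le int_symle //=.
have := @int_symle (fun x : R => f (- x)%R) (fun x => f0 _) => /=.
by under eq_integral do rewrite opprK.
Qed.
Lemma int_scale_le (k : R) (f : R -> \bar R) : (0 < k)%R -> (forall x, 0 <= f x) ->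
  \int[N]_x (k%:E * f x) <= k%:E * \int[N]_x f x.
Proof.
move=> k0 f0; rewrite !ge0_integralTE //; last by move=> x; rewrite mule_ge0 // lee_fin ltW.
apply: ge_ereal_sup => _ [h hk <-].
have ki : (0 <= k^-1)%R by rewrite invr_ge0 ltW.
have -> : sintegral N h = k%:E * sintegral N (scale_nnsfun h ki).
  rewrite /scale_nnsfun /= sintegralrM muleA -EFinM divff ?gt_eqF // mul1e.
  by apply: eq_sintegral => x.
rewrite lee_pmul2l // ?lte_fin //; apply: ereal_sup_ubound.
exists (scale_nnsfun h ki) => // x /=.
by rewrite EFinM lee_pdivrMl // -?EFinM.
Qed.

Lemma esup_add_le (A B : set (\bar R)) c : A 0 -> B 0 ->
  (forall a b, A a -> B b -> a + b <= c) -> ereal_sup A + ereal_sup B <= c.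
Proof.
case: c => [r| |] A0 B0 H; last 2 first.
- exact: leey.
- by have := H 0 0 A0 B0; rewrite adde0 leeNy_eq.
rewrite -lee_suber_addr //; apply: ge_ereal_sup => a Aa.
rewrite lee_suber_addr // addeC -lee_suber_addr //.
apply: ge_ereal_sup => b Bb; rewrite lee_suber_addr // addeC; exact: H.
Qed.

Lemma int_superadd (f g : R -> \bar R) : (forall x, 0 <= f x) -> (forall x, 0 <= g x) ->
  \int[N]_x f x + \int[N]_x g x <= \int[N]_x (f x + g x).
Proof.
move=> f0 g0; rewrite !ge0_integralTE //; last by move=> x; exact: adde_ge0.
apply: esup_add_le.
- by exists nnsfun0 => //; exact: sintegral0.
- by exists nnsfun0 => //; exact: sintegral0.
move=> _ _ [h1 h1f <-] [h2 h2g <-].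
rewrite -sintegralD //; apply: ereal_sup_ubound; exists (add_nnsfun h1 h2) => //.
by move=> x /=; rewrite EFinD; apply: leeD.
Qed.

Notation E n f := (@std_gauss_exp R n f).

Lemma sge_ge0 n (f : 'rV[R]_n -> \bar R) : (forall v, 0 <= f v) -> 0 <= E n f.
Proof.
elim: n f => [|n IH] f f0 /=; first exact: f0.
by apply: integral_ge0 => x _; apply: IH.
Qed.

Lemma sge_le n (f g : 'rV[R]_n -> \bar R) : (forall v, 0 <= f v) ->
  (forall v, f v <= g v) -> E n f <= E n g.
Proof.
elim: n f g => [|n IH] f g f0 fg /=; first exact: fg.
apply: int_le => x; first by apply: sge_ge0.
by apply: IH.
Qed.

Lemma sge_superadd n (f g : 'rV[R]_n -> \bar R) : (forall v, 0 <= f v) ->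
  (forall v, 0 <= g v) -> E n f + E n g <= E n (fun v => f v + g v).
Proof.
elim: n f g => [|n IH] f g f0 g0 /=; first by [].
apply: le_trans (@int_superadd (fun x => E n (fun v => f (row_mx (\row_(_ < 1) x) v)))
   (fun x => E n (fun v => g (row_mx (\row_(_ < 1) x) v))) _ _) _.
- by move=> x; apply: sge_ge0.
- by move=> x; apply: sge_ge0.
apply: int_le => x; first by apply: adde_ge0; apply: sge_ge0.
exact: IH.
Qed.

Lemma sge_scale n (k : R) (f : 'rV[R]_n -> \bar R) : (0 < k)%R ->
  (forall v, 0 <= f v) -> E n (fun v => k%:E * f v) <= k%:E * E n f.
Proof.
elim: n f => [|n IH] f k0 f0 /=; first by [].
apply: le_trans (@int_scale_le k (fun x => E n (fun v => f (row_mx (\row_(_ < 1) x) v))) k0 _); last by move=> x; apply: sge_ge0.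
apply: int_le => x; first by apply: sge_ge0 => v; rewrite mule_ge0 // lee_fin ltW.
exact: IH.
Qed.

Lemma sge_sym n (f : 'rV[R]_n -> \bar R) : (forall v, 0 <= f v) ->
  E n (fun v => f (- v)%R) = E n f.
Proof.
elim: n f => [|n IH] f f0 /=; first by rewrite oppr0.
rewrite -int_sym; last by move=> x; apply: sge_ge0.
apply: eq_integral => x _.
have -> : (fun v : 'rV[R]_n => f (- row_mx (\row_(_ < 1) (- x)%R) v)%R) =
   (fun v => (fun w => f (row_mx (\row_(_ < 1) x) w)) (- v)%R).
  apply/funext => v; rewrite opp_row_mx; congr f.
  have -> : (- \row_(_ < 1) (- x)%R)%R = \row_(_ < 1) x :> 'rV[R]_1.
    by apply/rowP => i; rewrite !mxE opprK.
  by [].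
exact: (IH (fun w => f (row_mx (\row_(_ < 1) x) w))).
Qed.
End Sym.

Section Relu.
Variable R : realType.
Variables al be : R.
Notation s := (relu_ab al be).

Lemma relu_pos a : 0 <= a -> s a = al * a.
Proof. by move=> h; rewrite /relu_ab h. Qed.
Lemma relu_neg a : a < 0 -> s a = be * a.
Proof. by move=> h; rewrite /relu_ab leNgt h. Qed.

Lemma relu0 : s 0 = 0.
Proof. by rewrite relu_pos // mulr0. Qed.

Lemma relu_sq a : s a * s a + s (- a) * s (- a) = (al ^+ 2 + be ^+ 2) * (a * a).
Proof.
have [ha|ha|->] := ltrgt0P a.
- rewrite relu_pos ?ltW // relu_neg ?oppr_lt0 //; ring.
- rewrite relu_neg // relu_pos ?oppr_ge0 ?ltW //; ring.
- by rewrite oppr0 relu_pos // !(mulr0, mul0r, addr0).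
Qed.

Lemma relu_pair a b :
  s a * s b + s (- a) * s (- b) =
  ((al + be) ^+ 2 * (a * b) + (al - be) ^+ 2 * (`|a| * `|b|)) / 2.
Proof.
have [ha|ha|->] := ltrgt0P a; last first.
  by rewrite !(oppr0, normr0, relu0, mulr0, mul0r, addr0).
all: have [hb|hb|->] := ltrgt0P b; last first.
all: try by rewrite !(oppr0, normr0, relu0, mulr0, mul0r, addr0).
all: first [
  (have h1 : 0 <= - a by rewrite oppr_ge0 ltW);
  (have h2 : - b < 0 by rewrite oppr_lt0);
  rewrite (relu_pos _ (ltW hb)) (relu_neg _ h2);
  rewrite (relu_neg _ ha) (relu_pos _ h1); field; done
 | (have h1 : 0 <= - a by rewrite oppr_ge0 ltW);
  (have h2 : 0 <= - b by rewrite oppr_ge0 ltW);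
  rewrite (relu_neg _ hb) (relu_pos _ h2);
  rewrite (relu_neg _ ha) (relu_pos _ h1); field; done
 | (have h1 : - a < 0 by rewrite oppr_lt0);
  (have h2 : - b < 0 by rewrite oppr_lt0);
  rewrite (relu_pos _ (ltW hb)) (relu_neg _ h2);
  rewrite (relu_pos _ (ltW ha)) (relu_neg _ h1); field; done
 | (have h1 : - a < 0 by rewrite oppr_lt0);
  (have h2 : 0 <= - b by rewrite oppr_ge0 ltW);
  rewrite (relu_neg _ hb) (relu_pos _ h2);
  rewrite (relu_pos _ (ltW ha)) (relu_neg _ h1); field; done ].
Qed.
End Relu.

Section Alg.
Variable R : realType.
Variable n : nat.
Variable e : rel 'I_n.

Definition rr (i : 'I_n) : R := (Num.sqrt (1 + deg R e i))^-1.
Definition aa (i j : 'I_n) : R := (e i j)%:R.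

Lemma deg_ge0 i : 0 <= deg R e i.
Proof. by rewrite /deg; apply: sumr_ge0 => j _; rewrite mxE ler0n. Qed.

Lemma degE i : deg R e i = \sum_j aa i j.
Proof. by rewrite /deg; apply: eq_bigr => j _; rewrite mxE. Qed.

Lemma rr_ge0 i : 0 <= rr i.
Proof. by rewrite /rr invr_ge0 sqrtr_ge0. Qed.

Lemma rr2 i : rr i ^+ 2 * (1 + deg R e i) = 1.
Proof.
have h : 0 < 1 + deg R e i by rewrite ltr_pwDl ?deg_ge0.
rewrite /rr exprVn sqr_sqrtr ?ltW // mulVf // gt_eqF //.
Qed.

Lemma AhatE i j : Ahat R e i j = rr i * (aa i j + (i == j)%:R) * rr j.
Proof.
rewrite /Ahat /Dtil_isqrt mul_mx_diag mul_diag_mx !mxE.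
by rewrite /aa eq_sym.
Qed.

Lemma LhatE i j : Lhat R e i j = (i == j)%:R - rr i * (aa i j + (i == j)%:R) * rr j.
Proof. rewrite -AhatE /Lhat; set A := Ahat R e. by rewrite !mxE. Qed.

Lemma DirE (x : 'rV[R]_n) :
  Dir e x = \sum_i \sum_j x 0 i * Lhat R e i j * x 0 j.
Proof.
rewrite /Dir mxE exchange_big /=; apply: eq_bigr => j _.
by rewrite mxE mulr_suml; apply: eq_bigr => i _; rewrite !mxE.
Qed.


Lemma Lhat_offdiag i j : i != j -> Lhat R e i j <= 0.
Proof.
move=> hij; rewrite LhatE (negbTE hij) addr0 sub0r oppr_le0.
by rewrite mulr_ge0 ?rr_ge0 // mulr_ge0 ?rr_ge0 // /aa ler0n.
Qed.

Lemma normr_sq (a : R) : `|a| * `|a| = a * a.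
Proof. by rewrite -normrM ger0_norm // -expr2 sqr_ge0. Qed.

Lemma Dir_relu (al be : R) (x : 'rV[R]_n) :
  Dir e (map_act (relu_ab al be) x) + Dir e (map_act (relu_ab al be) (- x))
  <= (al ^+ 2 + be ^+ 2) * Dir e x.
Proof.
rewrite !DirE -subr_le0 mulr_sumr -big_split -sumrB /=.
apply: sumr_le0 => i _; rewrite mulr_sumr -big_split -sumrB /=.
apply: sumr_le0 => j _.
have Loff := @Lhat_offdiag i j.
set L := Lhat R e i j in Loff *.
rewrite !mxE.
set a := x 0 i; set b := x 0 j.
set s := relu_ab al be.
have -> : s a * L * s b + s (- a) * L * s (- b) - (al ^+ 2 + be ^+ 2) * (a * L * b)
  = L * (s a * s b + s (- a) * s (- b)) - (al ^+ 2 + be ^+ 2) * (a * L * b) by ring.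
rewrite relu_pair.
have [hij|hij] := eqVneq i j.
  rewrite /b -hij -/a normr_sq.
  have -> : L * (((al + be) ^+ 2 * (a * a) + (al - be) ^+ 2 * (a * a)) / 2) -
    (al ^+ 2 + be ^+ 2) * (a * L * a) = 0 by field.
  by [].
have -> : L * (((al + be) ^+ 2 * (a * b) + (al - be) ^+ 2 * (`|a| * `|b|)) / 2) -
    (al ^+ 2 + be ^+ 2) * (a * L * b) = L * ((al - be) ^+ 2 / 2 * (`|a| * `|b| - a * b)) by field.
apply: mulr_le0_ge0; first exact: Loff.
apply: mulr_ge0; first by rewrite divr_ge0 ?sqr_ge0.
by rewrite subr_ge0 -normrM ler_norm.
Qed.

Lemma Dir_ge0 (x : 'rV[R]_n) : (forall i j, e i j = e j i) -> 0 <= Dir e x.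
Proof.
move=> sym.
pose y i := rr i * x 0 i.
have key : Dir e x = \sum_i \sum_j aa i j * (y i ^+ 2 - y i * y j).
  rewrite DirE; apply: eq_bigr => i _.
  have -> : \sum_j x 0 i * Lhat R e i j * x 0 j =
      \sum_j ((i == j)%:R * (x 0 i * x 0 j - y i * y j)) - \sum_j aa i j * (y i * y j).
    rewrite -sumrB; apply: eq_bigr => j _; rewrite LhatE /y; ring.
  rewrite (bigD1 i) //= eqxx mul1r big1 ?addr0; last first.
    by move=> j hj; rewrite eq_sym (negbTE hj) mul0r.
  have -> : x 0 i * x 0 i - y i * y i = \sum_j aa i j * y i ^+ 2.
    rewrite -mulr_suml -degE /y.
    have h := rr2 i.
    have -> : x 0 i * x 0 i = x 0 i * x 0 i * (rr i ^+ 2 * (1 + deg R e i)) by rewrite h mulr1.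
    ring.
  by rewrite -sumrB; apply: eq_bigr => j _; ring.
have HU : \sum_i \sum_j aa i j * y j ^+ 2 = \sum_i \sum_j aa i j * y i ^+ 2.
  rewrite exchange_big /=; apply: eq_bigr => i _; apply: eq_bigr => j _.
  by rewrite /aa sym.
have H2 : Dir e x * 2 = \sum_i \sum_j aa i j * (y i - y j) ^+ 2
   + (\sum_i \sum_j aa i j * y i ^+ 2 - \sum_i \sum_j aa i j * y j ^+ 2).
  rewrite key mulr_suml -sumrB -big_split /=; apply: eq_bigr => i _.
  rewrite mulr_suml -sumrB -big_split /=; apply: eq_bigr => j _; ring.
have : 0 <= Dir e x * 2.
  rewrite H2 HU subrr addr0; apply: sumr_ge0 => i _; apply: sumr_ge0 => j _.
  by rewrite mulr_ge0 ?sqr_ge0 // /aa ler0n.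
by rewrite pmulr_lge0.
Qed.

End Alg.

Lemma ext_two_mul (R : realType) (a : \bar R) : (0 <= a)%E -> (2%:E * a = a + a)%E.
Proof.
case: a => [r| |] // _.
  by rewrite -EFinM -EFinD mulr_natl mulr2n.
by rewrite mulry gtr0_sg ?mul1e // ltr0n.
Qed.

Theorem mainTheorem13 (R : realType) (n : nat) (e : rel 'I_n)
  (alpha beta : R) (Sigma L : 'M[R]_n) :
  is_graph e -> is_ab_relu alpha beta ->
  psd Sigma -> L *m L^T = Sigma ->
  (gauss_exp L (fun h => (Dir e (map_act (relu_ab alpha beta) h))%:E)
   <= ((alpha ^+ 2 + beta ^+ 2) / 2)%:E * gauss_exp L (fun h => (Dir e h)%:E))%E.
Proof.
move=> [sym _] [a0 [b0 nab]] _ _.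
rewrite /gauss_exp.
set k := alpha ^+ 2 + beta ^+ 2.
have k0 : 0 < k.
  rewrite lt_def addr_ge0 ?sqr_ge0 // andbT; apply/negP.
  rewrite paddr_eq0 ?sqr_ge0 // !sqrf_eq0 => /andP [/eqP ha /eqP hb]; exact: nab.
set F := fun z : 'rV[R]_n => (Dir e (map_act (relu_ab alpha beta) (z *m L^T)))%:E.
set G := fun z : 'rV[R]_n => (Dir e (z *m L^T))%:E.
have F0 z : (0 <= F z)%E by rewrite lee_fin Dir_ge0.
have G0 z : (0 <= G z)%E by rewrite lee_fin Dir_ge0.
have pt z : (F z + F (- z)%R <= k%:E * G z)%E.
  by rewrite /F /G mulNmx -EFinD -EFinM lee_fin Dir_relu.
have H : (std_gauss_exp F + std_gauss_exp F <= k%:E * std_gauss_exp G)%E.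
  rewrite -{2}(@sge_sym R n F) //.
  apply: le_trans (@sge_superadd R n F (fun z => F (- z)%R) _ _) _ => //.
  apply: le_trans (@sge_scale R n k G k0 _) => //.
  by apply: sge_le => v; [exact: adde_ge0 | exact: pt].
have EF0 : (0 <= std_gauss_exp F)%E by exact: sge_ge0.
rewrite -ext_two_mul // in H.
by rewrite EFinM muleAC muleC lee_pdivlMl.
Qed.
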